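(* Let $E$ be a Banach lattice with an order continuous norm, let $\mathfrak{B}$ be a Boolean subalgebra of $\mathfrak{B}(E)$, and let $S\colon\mathfrak{B}\to\mathfrak{B}$ be a sectionally open transformation with $S(\mathbf 0)=\mathbf 0$. If $\xi$ is a forward filtration in $\mathfrak{B}$, then $n\mapsto S(\xi_n)$, $n\in\{0,1,\dots,\infty\}$, is a forward filtration in $\mathfrak{B}$. In particular, the semigroup of sectionally open transformations fixing $\mathbf 0$ acts on the set of forward filtrations in $\mathfrak{B}$ by coordinatewise evaluation.
   Context: $\mathfrak{B}(E)$ is the Boolean algebra of all order projections on $E$ ($\pi\le\rho$ iff $\pi\rho=\pi$, zero $\mathbf 0$, unit $\mathbf 1=I_E$). For $\pi\in\mathfrak{B}$ let $\mathrm{Sc}(\pi)=\{\pi'\in\mathfrak{B}:\pi\le\pi'\}$; a map $S\colon\mathfrak{B}\to\mathfrak{B}$ is sectionally open if $S(\mathrm{Sc}(\pi))=\mathrm{Sc}(S(\pi))$ for all $\pi\in\mathfrak{B}$. A forward filtration in $\mathfrak{B}$ is a map $\xi\colon\{0,1,\dots,\infty\}\to\mathfrak{B}$ with $\xi_n\le\xi_{n+1}$ for all $n\ge0$, $\xi_0=\mathbf 0$, $\xi_\infty=\mathbf 1$. *)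

(* Defs.v *)
From HB Require Import structures.
From mathcomp Require Import all_boot all_order all_algebra.
From mathcomp Require Import all_classical all_reals all_analysis.
Set Implicit Arguments. Unset Strict Implicit. Unset Printing Implicit Defensive.
Import Order.TTheory GRing.Theory Num.Theory.
Import numFieldNormedType.Exports.
Local Open Scope classical_set_scope.
Local Open Scope ring_scope.

Section BanachLattice.
Context {R : realType} {E : completeNormedModType R}.
Variable le : E -> E -> Prop.

Definition is_sup2 (x y s : E) : Prop :=
  le x s /\ le y s /\ (forall z, le x z -> le y z -> le s z).
Definition is_inf2 (x y s : E) : Prop :=
  le s x /\ le s y /\ (forall z, le z x -> le z y -> le z s).

(* le makes E a vector lattice, and the norm is a lattice norm;
   completeness is built into E : completeNormedModType R. *)
Definition banach_lattice_order : Prop :=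
  [/\ (forall x, le x x),
      (forall x y, le x y -> le y x -> x = y),
      (forall x y z, le x y -> le y z -> le x z),
      (forall x y, exists s, is_sup2 x y s) &
      (forall x y, exists s, is_inf2 x y s)] /\
  [/\ (forall x y z, le x y -> le (x + z) (y + z)),
      (forall (a : R) x, 0 <= a -> le 0 x -> le 0 (a *: x)) &
      (forall x y ax ay, is_sup2 x (- x) ax -> is_sup2 y (- y) ay ->
                         le ax ay -> `|x| <= `|y|)].

(* order continuous norm: whenever a downward directed set A has infimum 0,
   i.e. the net A decreases to 0, its norms tend to 0 (equivalently, since
   the norm is monotone on the decreasing net, inf_{a in A} ||a|| = 0). *)
Definition order_continuous_norm : Prop :=
  forall A : set E,
    A !=set0 ->
    (forall a b, A a -> A b -> exists2 c, A c & le c a /\ le c b) ->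
    (forall a, A a -> le 0 a) ->
    (forall z, (forall a, A a -> le z a) -> le z 0) ->
    forall e : R, 0 < e -> exists2 a, A a & `|a| < e.

Definition order_projection (pi : E -> E) : Prop :=
  [/\ (forall (a : R) x y, pi (a *: x + y) = a *: pi x + pi y),
      (forall x, pi (pi x) = pi x) &
      (forall x, le 0 x -> le 0 (pi x) /\ le (pi x) x)].

Definition proj0 : E -> E := fun _ => 0.
Definition proj1 : E -> E := id.
Definition proj_meet (p q : E -> E) : E -> E := fun x => p (q x).
Definition proj_compl (p : E -> E) : E -> E := fun x => x - p x.
Definition proj_join (p q : E -> E) : E -> E := fun x => p x + q x - p (q x).

Definition boolean_subalgebra (B : set (E -> E)) : Prop :=
  [/\ (forall p, B p -> order_projection p),
      B proj0 & B proj1] /\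
  [/\
      (forall p q, B p -> B q -> B (proj_meet p q)),
      (forall p q, B p -> B q -> B (proj_join p q)) &
      (forall p, B p -> B (proj_compl p))].

Definition proj_le (p q : E -> E) : Prop := proj_meet p q = p.

Definition Sc (B : set (E -> E)) (p : E -> E) : set (E -> E) :=
  [set q | B q /\ proj_le p q].

(* S : B -> B (only the values on B matter) *)
Definition maps_into (B : set (E -> E)) (S : (E -> E) -> (E -> E)) : Prop :=
  forall p, B p -> B (S p).

Definition sectionally_open (B : set (E -> E)) (S : (E -> E) -> (E -> E)) :=
  forall p, B p -> S @` Sc B p = Sc B (S p).

End BanachLattice.

Inductive natinf := Fin of nat | Inf.

Definition forward_filtration {R : realType} {E : completeNormedModType R}
  (le : E -> E -> Prop) (B : set (E -> E)) (xi : natinf -> (E -> E)) : Prop :=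
  [/\ (forall i, B (xi i)),
      (forall n : nat, proj_le (xi (Fin n)) (xi (Fin n.+1))),
      xi (Fin 0) = proj0 & xi Inf = proj1].

(* Main.v *)
Require Import Defs.
From mathcomp Require Import all_boot all_order all_algebra.
From mathcomp Require Import all_classical all_reals all_analysis.
Import numFieldNormedType.Exports.
Local Open Scope classical_set_scope.
Local Open Scope ring_scope.

Theorem proposition3p18 (R : realType) (E : completeNormedModType R)
  (le : E -> E -> Prop)
  (hBL : banach_lattice_order le) (hOC : order_continuous_norm le)
  (B : set (E -> E)) (hB : boolean_subalgebra le B)
  (S : (E -> E) -> (E -> E)) (hSB : maps_into B S)
  (hS : sectionally_open B S) (hS0 : S proj0 = proj0) :
  (forall xi : natinf -> (E -> E), forward_filtration le B xi ->
     forward_filtration le B (fun i => S (xi i))) /\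
  (forall T : (E -> E) -> (E -> E), maps_into B T ->
     sectionally_open B T -> T proj0 = proj0 ->
     [/\ maps_into B (fun p => T (S p)),
         sectionally_open B (fun p => T (S p)) &
         T (S proj0) = proj0]).
Proof.
have Sc1 : forall p, B p -> proj_le p proj1.
  by move=> p _; rewrite /proj_le /proj_meet.
split.
  move=> xi [hxi hmono h0 hinf]; split => //.
  - by move=> i; apply: hSB.
  - move=> n.
    have : Sc B (S (xi (Fin n))) (S (xi (Fin n.+1))).
      rewrite -hS //; exists (xi (Fin n.+1)) => //; split => //.
    by case.
  - by rewrite /= h0.
  - rewrite /= hinf.
    have hB1 : B proj1 by case: hB => -[].
    have : Sc B (S proj1) proj1 by split => //; exact: Sc1 (hSB _ hB1).
    rewrite -hS //; case=> q [Bq hq] Hq.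
    suff E1 : q = proj1 by rewrite -E1 in Hq *.
    rewrite /proj_le /proj_meet /proj1 in hq.
    by apply/funext => x /=; have := congr1 (fun f => f x) hq.
move=> T hTB hT hT0; split.
- by move=> p Bp; apply: hTB; apply: hSB.
- move=> p Bp.
  rewrite -(hT _ (hSB _ Bp)) -(hS _ Bp).
  apply/seteqP; split => x /=.
    by case=> q Hq <-; exists (S q) => //; exists q.
  by case=> y [q Hq <-] <-; exists q.
- by rewrite hS0.
Qed.
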